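(* Let $S$ be an AG-groupoid with left identity $e$, and let $P$ be a left ideal of $S$. Then $P$ is quasi-prime if and only if for all $a,b\in S$, $(Sa)b\subseteq P$ implies $a\in P$ or $b\in P$.
   Context: An AG-groupoid is a set $S$ with a binary operation satisfying $(ab)c=(cb)a$ for all $a,b,c\in S$. A left identity is an element $e$ with $ea=a$ for all $a\in S$. For nonempty subsets, $AB=\{ab:a\in A,b\in B\}$; for $a\in S$, $Sa=\{sa:s\in S\}$ and $(Sa)b=\{(sa)b: s\in S\}$. A left ideal is a nonempty subset $I$ with $SI\subseteq I$. A left ideal $P$ is quasi-prime if for all left ideals $A,B$ of $S$, $AB\subseteq P$ implies $A\subseteq P$ or $B\subseteq P$. *)

(* Defs.v *)
Definition AG_groupoid {S : Type} (mul : S -> S -> S) : Prop :=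
  forall a b c : S, mul (mul a b) c = mul (mul c b) a.

Definition left_identity {S : Type} (mul : S -> S -> S) (e : S) : Prop :=
  forall a : S, mul e a = a.

Definition subset {S : Type} (A B : S -> Prop) : Prop := forall x, A x -> B x.

Definition setmul {S : Type} (mul : S -> S -> S) (A B : S -> Prop) : S -> Prop :=
  fun x => exists a b, A a /\ B b /\ x = mul a b.

Definition left_ideal {S : Type} (mul : S -> S -> S) (I : S -> Prop) : Prop :=
  (exists x, I x) /\ subset (setmul mul (fun _ => True) I) I.

Definition quasi_prime {S : Type} (mul : S -> S -> S) (P : S -> Prop) : Prop :=
  left_ideal mul P /\
  forall A B : S -> Prop, left_ideal mul A -> left_ideal mul B ->
    subset (setmul mul A B) P -> subset A P \/ subset B P.

Definition Sab {S : Type} (mul : S -> S -> S) (a b : S) : S -> Prop :=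
  fun x => exists s, x = mul (mul s a) b.

(* Main.v *)
Require Import Defs.
From Stdlib Require Import Classical.

Theorem theorem4 (S : Type) (mul : S -> S -> S) (e : S)
  (hAG : AG_groupoid mul) (he : left_identity mul e)
  (P : S -> Prop) (hP : left_ideal mul P) :
  quasi_prime mul P <->
  (forall a b : S, subset (Sab mul a b) P -> P a \/ P b).
Proof.
  assert (swap : forall a b c, mul a (mul b c) = mul b (mul a c)).
  { intros a b c. rewrite <- (he a) at 1. rewrite hAG.
    rewrite (hAG b c a). rewrite <- hAG. rewrite he. reflexivity. }
  assert (hPl : forall s x, P x -> P (mul s x)).
  { intros s x Hx. apply (proj2 hP). exists s, x. auto. }
  split.
  - intros [_ HQ] a b Hab.
    set (A := fun x => exists s, x = mul s a).
    set (B := fun x => exists s, x = mul s b).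
    assert (LI : forall c, left_ideal mul (fun x => exists s, x = mul s c)).
    { intro c. split. exists (mul e c). exists e. reflexivity.
      intros x [s [y [_ [[t Ht] Hx]]]]. subst.
      exists (mul (mul s e) t).
      rewrite hAG, (swap (mul c t) s e), (hAG c t e), he. reflexivity. }
    destruct (HQ A B (LI a) (LI b)) as [H|H].
    + intros x [u [v [[s Hs] [[t Ht] Hx]]]]. subst.
      rewrite swap. apply hPl. apply Hab. exists s. reflexivity.
    + left. apply H. exists e. symmetry. apply he.
    + right. apply H. exists e. symmetry. apply he.
  - intros H. split; [exact hP|].
    intros A B HA HB HAB.
    destruct (classic (subset A P)) as [Y|N]; [left; exact Y|right].
    apply not_all_ex_not in N. destruct N as [a Na].
    apply imply_to_and in Na. destruct Na as [Aa Pa].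
    intros b Bb.
    destruct (H a b) as [X|X]; [|contradiction|exact X].
    intros x [s Hx]. subst. apply HAB. exists (mul s a), b.
    split; [|split; auto]. apply (proj2 HA). exists s, a. auto.
Qed.
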